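(* The space $\mathcal K=\bigcup_{d\ge 2}\mathcal O_d$ of all polynomial knots, equipped with the inductive limit topology, is homotopy equivalent to $S^2$.
   Context: A polynomial map is a map $\phi:\mathbb R\to\mathbb R^3$ whose three component functions are real polynomials. A polynomial knot is a polynomial map which is a smooth embedding, i.e. $\phi$ is injective and $\phi'(t)\neq 0$ for all $t$. For an integer $d\ge 2$, $\mathcal A_d$ denotes the set of polynomial maps $t\mapsto (f(t),g(t),h(t))$ with $\deg f\le d-2$, $\deg g\le d-1$, $\deg h\le d$ (the zero polynomial allowed). Writing $f=\sum_{i=0}^{d-2}a_it^i$, $g=\sum_{i=0}^{d-1}b_it^i$, $h=\sum_{i=0}^{d}c_it^i$, the bijection $\eta:\mathcal A_d\to\mathbb R^{3d}$, $(f,g,h)\mapsto(a_0,\dots,a_{d-2},b_0,\dots,b_{d-1},c_0,\dots,c_d)$ is declared a homeomorphism (Euclidean topology on $\mathbb R^{3d}$). $\mathcal O_d$ is the set of polynomial knots in $\mathcal A_d$, with the subspace topology. Every polynomial knot lies in some $\mathcal O_d$, and $\mathcal K=\bigcup_{d\ge2}\mathcal O_d$ is the set of all polynomial knots. The inductive limit topology on $\mathcal K$: a set $V\subseteq\mathcal K$ is open iff $V\cap\mathcal O_d$ is open in $\mathcal O_d$ for every $d\ge 2$. *)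

(* Defs.v *)
From Stdlib Require Import Reals.
Open Scope R_scope.

(* A topology on X is given by its predicate of open sets. *)
Definition topology (X : Type) := (X -> Prop) -> Prop.

Definition continuous {X Y : Type} (TX : topology X) (TY : topology Y)
  (f : X -> Y) : Prop :=
  forall V : Y -> Prop, TY V -> TX (fun x => V (f x)).

Definition prod_top {X Y : Type} (TX : topology X) (TY : topology Y)
  : topology (X * Y) :=
  fun W => forall x y, W (x, y) ->
    exists (U : X -> Prop) (V : Y -> Prop),
      TX U /\ TY V /\ U x /\ V y /\
      (forall x' y', U x' -> V y' -> W (x', y')).

Definition I01 := { t : R | 0 <= t <= 1 }.
Definition I01_top : topology I01 :=
  fun U => forall p, U p -> exists eps, eps > 0 /\
    forall q : I01, Rabs (proj1_sig q - proj1_sig p) < eps -> U q.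

Definition homotopic {X Y : Type} (TX : topology X) (TY : topology Y)
  (f g : X -> Y) : Prop :=
  exists H : X * I01 -> Y,
    continuous (prod_top TX I01_top) TY H /\
    (forall x t, proj1_sig t = 0 -> H (x, t) = f x) /\
    (forall x t, proj1_sig t = 1 -> H (x, t) = g x).

Definition homotopy_equivalent {X Y : Type} (TX : topology X) (TY : topology Y)
  : Prop :=
  exists (f : X -> Y) (g : Y -> X),
    continuous TX TY f /\ continuous TY TX g /\
    homotopic TX TX (fun x => g (f x)) (fun x => x) /\
    homotopic TY TY (fun y => f (g y)) (fun y => y).

Definition sq3 (v : R * R * R) : R :=
  let '(x, y, z) := v in x * x + y * y + z * z.
Definition S2 := { v : R * R * R | sq3 v = 1 }.
Definition dist2_R3 (v w : R * R * R) : R :=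
  let '(x, y, z) := v in let '(x', y', z') := w in
  (x - x') * (x - x') + (y - y') * (y - y') + (z - z') * (z - z').
Definition S2_top : topology S2 :=
  fun U => forall p, U p -> exists eps, eps > 0 /\
    forall q : S2, dist2_R3 (proj1_sig q) (proj1_sig p) < eps * eps -> U q.

(* A real polynomial is given by its coefficient sequence (coefficient of t^i
   at index i); a polynomial map R -> R^3 is a triple (f, g, h). *)
Definition PolyMap := ((nat -> R) * (nat -> R) * (nat -> R))%type.

Definition pf (p : PolyMap) := fst (fst p).
Definition pg (p : PolyMap) := snd (fst p).
Definition ph (p : PolyMap) := snd p.

Definition peval (c : nat -> R) (N : nat) (t : R) : R :=
  sum_f_R0 (fun i => c i * t ^ i) N.
Definition pderiv (c : nat -> R) (N : nat) (t : R) : R :=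
  sum_f_R0 (fun i => INR (S i) * c (S i) * t ^ i) N.

Definition map_eval (p : PolyMap) (N : nat) (t : R) : R * R * R :=
  (peval (pf p) N t, peval (pg p) N t, peval (ph p) N t).
Definition map_deriv (p : PolyMap) (N : nat) (t : R) : R * R * R :=
  (pderiv (pf p) N t, pderiv (pg p) N t, pderiv (ph p) N t).

Definition deg_bound (p : PolyMap) (N : nat) : Prop :=
  forall i, (N < i)%nat -> pf p i = 0 /\ pg p i = 0 /\ ph p i = 0.

Definition is_poly_knot (p : PolyMap) : Prop :=
  exists N, deg_bound p N /\
    (forall s t, map_eval p N s = map_eval p N t -> s = t) /\
    (forall t, map_deriv p N t <> (0, 0, 0)).

Definition in_A (d : nat) (p : PolyMap) : Prop :=
  forall i,
    ((d - 1 <= i)%nat -> pf p i = 0) /\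
    ((d <= i)%nat -> pg p i = 0) /\
    ((d + 1 <= i)%nat -> ph p i = 0).

(* squared Euclidean distance in R^{3d} between eta(p) and eta(q), for
   p, q in A_d (the terms with indices outside the coordinate ranges vanish) *)
Definition distA2 (d : nat) (p q : PolyMap) : R :=
  sum_f_R0 (fun i =>
    (pf p i - pf q i) * (pf p i - pf q i) +
    (pg p i - pg q i) * (pg p i - pg q i) +
    (ph p i - ph q i) * (ph p i - ph q i)) d.

Definition Knots := { p : PolyMap | is_poly_knot p }.

(* O_d inside K is { p in K | p in A_d }.  V subset K is open in the inductive
   limit topology iff for each d >= 2, V cap O_d is open in O_d, where O_d has
   the subspace topology of A_d ~ R^{3d} (Euclidean). *)
Definition K_top : topology Knots :=
  fun V => forall d : nat, (2 <= d)%nat ->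
    forall p : Knots, in_A d (proj1_sig p) -> V p ->
      exists eps, eps > 0 /\
        forall q : Knots, in_A d (proj1_sig q) ->
          distA2 d (proj1_sig p) (proj1_sig q) < eps * eps -> V q.

(* Main.v *)
Require Import Defs.
From Stdlib Require Import Reals.
From Stdlib Require Import Lra Lia Classical FunctionalExtensionality ProofIrrelevance.
Open Scope R_scope.

Lemma sum_nonneg (T : nat -> R) n : (forall i, 0 <= T i) -> 0 <= sum_f_R0 T n.
Proof. intro H; induction n; simpl; [apply H|]. specialize (H (S n)); lra. Qed.

Lemma sum_ge_term (T : nat -> R) n i : (forall j, 0 <= T j) -> (i <= n)%nat -> T i <= sum_f_R0 T n.
Proof.
  intros H Hi; induction n; simpl.
  - assert (i = 0%nat) by lia; subst; lra.
  - destruct (Nat.eq_dec i (S n)) as [->|Hne].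
    + pose proof (sum_nonneg T n H); lra.
    + assert (i <= n)%nat by lia. specialize (IHn H0). specialize (H (S n)); lra.
Qed.

Lemma sum_zero (T : nat -> R) n : (forall i, T i = 0) -> sum_f_R0 T n = 0.
Proof. intro H; induction n; simpl; rewrite ?IHn, H; ring. Qed.

Lemma sum_lt_bound (T : nat -> R) n e : (forall i, (i <= n)%nat -> T i < e) ->
  sum_f_R0 T n < INR (S n) * e.
Proof.
  intro H; induction n; simpl.
  - specialize (H 0%nat (le_n 0)); lra.
  - assert (IH : sum_f_R0 T n < INR (S n) * e) by (apply IHn; intros; apply H; lia).
    specialize (H (S n) (le_n _)).
    rewrite S_INR in *. destruct n; simpl in *; lra.
Qed.

Lemma sq_lt a e : Rabs a < e -> a * a < e * e.
Proof.
  intro H. pose proof (Rabs_pos a).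
  replace (a * a) with (Rabs a * Rabs a).
  - nra.
  - rewrite <- Rabs_mult. apply Rabs_right. nra.
Qed.

Lemma abs_of_sq a e : 0 < e -> a * a < e * e -> Rabs a < e.
Proof.
  intros He H. rewrite <- (Rabs_right e) by lra. apply Rsqr_lt_abs_0. unfold Rsqr; lra.
Qed.

Lemma cpt_eps (g : R -> R) x : continuity_pt g x ->
  forall e, 0 < e -> exists h, 0 < h /\ forall y, Rabs (y - x) < h -> Rabs (g y - g x) < e.
Proof.
  intros Hc e He. destruct (Hc e He) as [h [Hh Hy]].
  exists h; split; auto. intros y Hyx.
  destruct (Req_dec y x) as [->|Hne].
  - unfold Rminus; rewrite Rplus_opp_r, Rabs_R0; lra.
  - apply (Hy y). split. split; auto. exact I. auto.
Qed.

Lemma mult_close x0 y0 e : 0 < e -> exists h, 0 < h /\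
  forall x y, Rabs (x - x0) < h -> Rabs (y - y0) < h -> Rabs (x * y - x0 * y0) < e.
Proof.
  intro He.
  set (h := Rmin 1 (e / (2 * (Rabs x0 + Rabs y0 + 1)))).
  assert (Hp : 0 < Rabs x0 + Rabs y0 + 1) by (pose proof (Rabs_pos x0); pose proof (Rabs_pos y0); lra).
  assert (Hh1 : h <= 1) by apply Rmin_l.
  assert (Hh2 : h <= e / (2 * (Rabs x0 + Rabs y0 + 1))) by apply Rmin_r.
  assert (Hh0 : 0 < h).
  { apply Rmin_glb_lt; [lra|]. apply Rdiv_lt_0_compat; lra. }
  exists h; split; auto. intros x y Hx Hy.
  replace (x * y - x0 * y0) with ((x - x0) * (y - y0) + (x - x0) * y0 + x0 * (y - y0)) by ring.
  assert (Hb : h * (Rabs x0 + Rabs y0 + 1) <= e / 2).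
  { apply (Rmult_le_compat_r (Rabs x0 + Rabs y0 + 1)) in Hh2; [|lra].
    replace (e / (2 * (Rabs x0 + Rabs y0 + 1)) * (Rabs x0 + Rabs y0 + 1)) with (e/2) in Hh2 by (field; lra).
    lra. }
  pose proof (Rabs_triang ((x - x0) * (y - y0) + (x - x0) * y0) (x0 * (y - y0))).
  pose proof (Rabs_triang ((x - x0) * (y - y0)) ((x - x0) * y0)).
  rewrite !Rabs_mult in *.
  pose proof (Rabs_pos (x - x0)); pose proof (Rabs_pos (y - y0)); pose proof (Rabs_pos x0); pose proof (Rabs_pos y0).
  assert (Rabs (x - x0) * Rabs (y - y0) <= h * h) by nra.
  assert (Rabs (x - x0) * Rabs y0 <= h * Rabs y0) by nra.
  assert (Rabs x0 * Rabs (y - y0) <= Rabs x0 * h) by nra.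
  nra.
Qed.
Definition contAt (d : nat) (q0 : PolyMap) (s0 : R) (F : PolyMap -> R -> R) : Prop :=
  forall e, 0 < e -> exists h, 0 < h /\ forall q s, in_A d q -> distA2 d q0 q < h ->
    Rabs (s - s0) < h -> Rabs (F q s - F q0 s0) < e.

Lemma contAt_const d q0 s0 c : contAt d q0 s0 (fun _ _ => c).
Proof. intros e He; exists 1; split; [lra|]; intros; unfold Rminus; rewrite Rplus_opp_r, Rabs_R0; lra. Qed.

Lemma contAt_s d q0 s0 : contAt d q0 s0 (fun _ s => s).
Proof. intros e He; exists e; split; auto. Qed.

Lemma contAt_plus d q0 s0 F G : contAt d q0 s0 F -> contAt d q0 s0 G ->
  contAt d q0 s0 (fun q s => F q s + G q s).
Proof.
  intros HF HG e He.
  destruct (HF (e/2)) as [h1 [H1 HF']]; [lra|].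
  destruct (HG (e/2)) as [h2 [H2 HG']]; [lra|].
  exists (Rmin h1 h2); split; [apply Rmin_glb_lt; auto|].
  intros q s Hq Hd Hs.
  pose proof (Rmin_l h1 h2); pose proof (Rmin_r h1 h2).
  specialize (HF' q s Hq ltac:(lra) ltac:(lra)). specialize (HG' q s Hq ltac:(lra) ltac:(lra)).
  replace (F q s + G q s - (F q0 s0 + G q0 s0)) with ((F q s - F q0 s0) + (G q s - G q0 s0)) by ring.
  pose proof (Rabs_triang (F q s - F q0 s0) (G q s - G q0 s0)); lra.
Qed.

Lemma contAt_mult d q0 s0 F G : contAt d q0 s0 F -> contAt d q0 s0 G ->
  contAt d q0 s0 (fun q s => F q s * G q s).
Proof.
  intros HF HG e He.
  destruct (mult_close (F q0 s0) (G q0 s0) e He) as [k [Hk Hm]].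
  destruct (HF k Hk) as [h1 [H1 HF']].
  destruct (HG k Hk) as [h2 [H2 HG']].
  exists (Rmin h1 h2); split; [apply Rmin_glb_lt; auto|].
  intros q s Hq Hd Hs.
  pose proof (Rmin_l h1 h2); pose proof (Rmin_r h1 h2).
  apply Hm; [apply HF'|apply HG']; auto; try lra.
Qed.

Lemma contAt_comp d q0 s0 F g : contAt d q0 s0 F -> continuity_pt g (F q0 s0) ->
  contAt d q0 s0 (fun q s => g (F q s)).
Proof.
  intros HF Hg e He.
  destruct (cpt_eps g _ Hg e He) as [k [Hk Hk']].
  destruct (HF k Hk) as [h [Hh HF']].
  exists h; split; [exact Hh|]. intros; apply Hk'; auto.
Qed.

Lemma contAt_pow d q0 s0 F n : contAt d q0 s0 F -> contAt d q0 s0 (fun q s => F q s ^ n).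
Proof.
  intro HF; induction n; simpl.
  - apply contAt_const.
  - apply contAt_mult; auto.
Qed.

Lemma term_le_dist d p q i : (i <= d)%nat ->
  (pf p i - pf q i) * (pf p i - pf q i) <= distA2 d p q /\
  (pg p i - pg q i) * (pg p i - pg q i) <= distA2 d p q /\
  (ph p i - ph q i) * (ph p i - ph q i) <= distA2 d p q.
Proof.
  intro Hi. unfold distA2.
  pose proof (sum_ge_term (fun i =>
    (pf p i - pf q i) * (pf p i - pf q i) +
    (pg p i - pg q i) * (pg p i - pg q i) +
    (ph p i - ph q i) * (ph p i - ph q i)) d i) as H.
  cbv beta in H.
  assert (Hnn : forall a, 0 <= a * a) by (intro; nra).
  pose proof (Hnn (pf p i - pf q i)); pose proof (Hnn (pg p i - pg q i)); pose proof (Hnn (ph p i - ph q i)).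
  assert (T : forall j, 0 <= (pf p j - pf q j) * (pf p j - pf q j) +
    (pg p j - pg q j) * (pg p j - pg q j) + (ph p j - ph q j) * (ph p j - ph q j)).
  { intro j. pose proof (Hnn (pf p j - pf q j)); pose proof (Hnn (pg p j - pg q j)); pose proof (Hnn (ph p j - ph q j)); lra. }
  specialize (H T Hi). lra.
Qed.

Lemma coef_close d p q i e : in_A d p -> in_A d q -> 0 < e -> distA2 d p q < e * e ->
  Rabs (pf q i - pf p i) < e /\ Rabs (pg q i - pg p i) < e /\ Rabs (ph q i - ph p i) < e.
Proof.
  intros Hp Hq He Hd.
  destruct (Compare_dec.le_lt_dec i d) as [Hi|Hi].
  - destruct (term_le_dist d p q i Hi) as [A [B C]].
    rewrite <- Rabs_Ropp.
    rewrite <- (Rabs_Ropp (pg q i - pg p i)), <- (Rabs_Ropp (ph q i - ph p i)).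
    rewrite !Ropp_minus_distr.
    repeat split; apply abs_of_sq; auto; lra.
  - destruct (Hp i) as [P1 [P2 P3]]; destruct (Hq i) as [Q1 [Q2 Q3]].
    rewrite P1, P2, P3, Q1, Q2, Q3 by lia.
    unfold Rminus; rewrite Rplus_opp_r, Rabs_R0; lra.
Qed.

Lemma contAt_pf d q0 s0 i : in_A d q0 -> contAt d q0 s0 (fun q _ => pf q i).
Proof. intros H0 e He; exists (e*e); split; [nra|]; intros; apply (coef_close d q0 q i e); auto. Qed.
Lemma contAt_pg d q0 s0 i : in_A d q0 -> contAt d q0 s0 (fun q _ => pg q i).
Proof. intros H0 e He; exists (e*e); split; [nra|]; intros; apply (coef_close d q0 q i e); auto. Qed.
Lemma contAt_ph d q0 s0 i : in_A d q0 -> contAt d q0 s0 (fun q _ => ph q i).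
Proof. intros H0 e He; exists (e*e); split; [nra|]; intros; apply (coef_close d q0 q i e); auto. Qed.

Lemma distA2_refl d p : distA2 d p p = 0.
Proof. unfold distA2; apply sum_zero; intro; ring. Qed.
Definition nrm (p : PolyMap) : R := sqrt (pf p 1 * pf p 1 + pg p 1 * pg p 1 + ph p 1 * ph p 1).
Definition lam (p : PolyMap) (s : R) : R := s + (1 - s) * / nrm p.
Definition hc (c : nat -> R) (l s : R) (i : nat) : R :=
  match i with O => s * c O | S j => l * c (S j) * s ^ j end.
Definition Hraw (p : PolyMap) (s : R) : PolyMap :=
  ((hc (pf p) (lam p s) s, hc (pg p) (lam p s) s), hc (ph p) (lam p s) s).

Lemma sum_pow0 (a : nat -> R) n : sum_f_R0 (fun i => a i * 0 ^ i) n = a O.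
Proof. induction n; simpl; [ring|]. rewrite IHn; ring. Qed.

Lemma pderiv0 c N : pderiv c N 0 = c 1%nat.
Proof.
  unfold pderiv. rewrite (sum_pow0 (fun i => INR (S i) * c (S i)) N). simpl; ring.
Qed.

Definition Ac (c : nat -> R) (M : nat) (x : R) := sum_f_R0 (fun i => c (S i) * x ^ i) M.

Lemma peval_decomp c M x : peval c (S M) x = c O + x * Ac c M x.
Proof.
  unfold peval, Ac. rewrite decomp_sum by lia. simpl pred.
  rewrite scal_sum. f_equal; [simpl; ring|]. apply sum_eq; intros; simpl; ring.
Qed.

Lemma peval_hc c l s M t : peval (hc c l s) (S M) t = s * c O + l * t * Ac c M (s * t).
Proof.
  unfold peval, Ac. rewrite decomp_sum by lia. simpl pred.
  rewrite scal_sum. f_equal; [simpl; ring|]. apply sum_eq; intros; simpl.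
  rewrite Rpow_mult_distr; ring.
Qed.

Lemma pderiv_hc c l s N t : pderiv (hc c l s) N t = l * pderiv c N (s * t).
Proof.
  unfold pderiv. rewrite scal_sum. apply sum_eq; intros; simpl.
  rewrite Rpow_mult_distr; ring.
Qed.

Lemma knot_facts p : is_poly_knot p ->
  ~ (pf p 1%nat = 0 /\ pg p 1%nat = 0 /\ ph p 1%nat = 0).
Proof.
  intros [N [Hd [Hi Hv]]] [A [B C]]. apply (Hv 0).
  unfold map_deriv. rewrite !pderiv0, A, B, C. reflexivity.
Qed.

Lemma nrm_pos p : ~ (pf p 1%nat = 0 /\ pg p 1%nat = 0 /\ ph p 1%nat = 0) -> 0 < nrm p.
Proof.
  intro H. unfold nrm. apply sqrt_lt_R0.
  destruct (Req_dec (pf p 1%nat) 0); [destruct (Req_dec (pg p 1%nat) 0)|].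
  - assert (ph p 1%nat <> 0) by tauto. assert (0 < ph p 1%nat * ph p 1%nat) by (apply Rsqr_pos_lt; auto). nra.
  - assert (0 < pg p 1%nat * pg p 1%nat) by (apply Rsqr_pos_lt; auto). nra.
  - assert (0 < pf p 1%nat * pf p 1%nat) by (apply Rsqr_pos_lt; auto). nra.
Qed.

Lemma lam_pos p s : 0 < nrm p -> 0 <= s <= 1 -> 0 < lam p s.
Proof.
  intros Hn Hs. unfold lam. assert (0 < / nrm p) by (apply Rinv_0_lt_compat; auto).
  destruct (Req_dec s 1); [subst; lra|]. nra.
Qed.

Lemma Hraw_knot p s : is_poly_knot p -> 0 <= s <= 1 -> is_poly_knot (Hraw p s).
Proof.
  intros Hk Hs. pose proof (knot_facts p Hk) as Hnz.
  pose proof (lam_pos p s (nrm_pos p Hnz) Hs) as Hl.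
  set (l := lam p s) in *.
  destruct Hk as [N [Hd [Hi Hv]]].
  destruct N as [|M].
  { exfalso. apply Hnz. destruct (Hd 1%nat ltac:(lia)) as [A [B C]]. auto. }
  exists (S M). split; [|split].
  - intros i Hi'. destruct i as [|j]; [lia|]. destruct (Hd (S j) Hi') as [A [B C]].
    unfold Hraw, pf, pg, ph in *; simpl in *. rewrite A, B, C. repeat split; ring.
  - intros t1 t2 He. unfold map_eval, Hraw, pf, pg, ph in He; simpl in He.
    rewrite !peval_hc in He. injection He as E1 E2 E3.
    assert (F : forall c, s * c O + l * t1 * Ac c M (s * t1) = s * c O + l * t2 * Ac c M (s * t2) ->
                t1 * Ac c M (s * t1) = t2 * Ac c M (s * t2)).
    { intros c E. apply (Rmult_eq_reg_l l); [|lra]. nra. }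
    apply F in E1; apply F in E2; apply F in E3.
    destruct (Req_dec s 0) as [Hs0|Hs0].
    + subst s. rewrite !Rmult_0_l in E1, E2, E3. unfold Ac in E1, E2, E3.
      rewrite !sum_pow0 in E1, E2, E3.
      destruct (Req_dec t1 t2) as [|Hne]; auto. exfalso. apply Hnz.
      unfold pf, pg, ph. repeat split.
      * apply (Rmult_eq_reg_l (t1 - t2)); [|lra]. nra.
      * apply (Rmult_eq_reg_l (t1 - t2)); [|lra]. nra.
      * apply (Rmult_eq_reg_l (t1 - t2)); [|lra]. nra.
    + assert (s * t1 = s * t2).
      { apply Hi. unfold map_eval. rewrite !peval_decomp.
        unfold pf, pg, ph.
        replace (s * t1 * Ac (fst (fst p)) M (s * t1)) with (s * (t1 * Ac (fst (fst p)) M (s * t1))) by ring.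
        replace (s * t1 * Ac (snd (fst p)) M (s * t1)) with (s * (t1 * Ac (snd (fst p)) M (s * t1))) by ring.
        replace (s * t1 * Ac (snd p) M (s * t1)) with (s * (t1 * Ac (snd p) M (s * t1))) by ring.
        rewrite E1, E2, E3. f_equal; [f_equal|]; ring. }
      apply (Rmult_eq_reg_l s); auto.
  - intros t Ht. apply (Hv (s * t)). unfold map_deriv, Hraw, pf, pg, ph in Ht |- *; simpl in Ht.
    rewrite !pderiv_hc in Ht. injection Ht as E1 E2 E3.
    assert (G : forall x, l * x = 0 -> x = 0) by (intros x Ex; apply (Rmult_eq_reg_l l); [|lra]; lra).
    rewrite (G _ E1), (G _ E2), (G _ E3). reflexivity.
Qed.

Lemma Hraw_inA d p s : in_A d p -> in_A d (Hraw p s).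
Proof.
  intros H i. destruct (H i) as [A [B C]]. unfold Hraw, pf, pg, ph in *; simpl.
  destruct i as [|j]; simpl.
  - repeat split; intro Hl; [rewrite A|rewrite B|rewrite C]; auto; ring.
  - repeat split; intro Hl; [rewrite A|rewrite B|rewrite C]; auto; ring.
Qed.
Lemma contAt_lam d q0 s0 : in_A d q0 -> 0 < nrm q0 -> contAt d q0 s0 lam.
Proof.
  intros HA Hn. unfold lam.
  apply contAt_plus; [apply contAt_s|]. apply contAt_mult.
  - apply contAt_plus; [apply contAt_const|].
    intros e He; exists e; split; auto. intros q s _ _ Hs.
    replace (- s - - s0) with (- (s - s0)) by ring. rewrite Rabs_Ropp; auto.
  - unfold nrm.
    assert (HS : contAt d q0 s0 (fun q _ => pf q 1%nat * pf q 1%nat + pg q 1%nat * pg q 1%nat + ph q 1%nat * ph q 1%nat)).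
    { repeat apply contAt_plus; apply contAt_mult; first [apply contAt_pf|apply contAt_pg|apply contAt_ph]; auto. }
    pose proof (contAt_comp _ _ _ _ (inv_fct sqrt) HS) as HC.
    apply HC. apply continuity_pt_inv.
    + apply continuity_pt_sqrt. nra.
    + unfold nrm in Hn. lra.
Qed.

Lemma contAt_hcoef d q0 s0 (C : PolyMap -> nat -> R) i :
  (forall j, contAt d q0 s0 (fun q _ => C q j)) -> contAt d q0 s0 lam ->
  contAt d q0 s0 (fun q s => hc (C q) (lam q s) s i).
Proof.
  intros HC HL. destruct i as [|j]; simpl.
  - apply contAt_mult; [apply contAt_s|apply HC].
  - apply contAt_mult; [apply contAt_mult; [apply HL|apply HC]|]. apply contAt_pow, contAt_s.
Qed.

Lemma contAt_finite d q0 s0 (F : nat -> PolyMap -> R -> R) n :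
  (forall i, (i <= n)%nat -> contAt d q0 s0 (F i)) ->
  forall e, 0 < e -> exists h, 0 < h /\ forall q s, in_A d q -> distA2 d q0 q < h ->
    Rabs (s - s0) < h -> forall i, (i <= n)%nat -> Rabs (F i q s - F i q0 s0) < e.
Proof.
  intros HF e He. induction n.
  - destruct (HF 0%nat (le_n _) e He) as [h [Hh H]]. exists h; split; auto.
    intros q s Hq Hd Hs i Hi. assert (i = 0%nat) by lia; subst; auto.
  - destruct IHn as [h1 [H1 Hh1]]; [intros; apply HF; lia|].
    destruct (HF (S n) (le_n _) e He) as [h2 [H2 Hh2]].
    exists (Rmin h1 h2); split; [apply Rmin_glb_lt; auto|].
    intros q s Hq Hd Hs i Hi. pose proof (Rmin_l h1 h2); pose proof (Rmin_r h1 h2).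
    destruct (Nat.eq_dec i (S n)) as [->|Hne].
    + apply Hh2; auto; lra.
    + apply Hh1; auto; try lra; lia.
Qed.

Lemma pf_Hraw q s : pf (Hraw q s) = hc (pf q) (lam q s) s. Proof. reflexivity. Qed.
Lemma pg_Hraw q s : pg (Hraw q s) = hc (pg q) (lam q s) s. Proof. reflexivity. Qed.
Lemma ph_Hraw q s : ph (Hraw q s) = hc (ph q) (lam q s) s. Proof. reflexivity. Qed.
Lemma sq_sym a b : (a - b) * (a - b) = (b - a) * (b - a). Proof. ring. Qed.

Lemma Hraw_cont d q0 s0 : in_A d q0 -> 0 < nrm q0 ->
  forall e, 0 < e -> exists h, 0 < h /\ forall q s, in_A d q -> distA2 d q0 q < h ->
    Rabs (s - s0) < h -> distA2 d (Hraw q0 s0) (Hraw q s) < e.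
Proof.
  intros HA Hn e He.
  pose proof (contAt_lam d q0 s0 HA Hn) as HL.
  set (eta := Rmin 1 (e / (3 * INR (S d)))).
  assert (HSd : 0 < INR (S d)) by apply lt_0_INR, Nat.lt_0_succ.
  assert (Heta0 : 0 < eta) by (apply Rmin_glb_lt; [lra|apply Rdiv_lt_0_compat; lra]).
  assert (Heta1 : eta <= 1) by apply Rmin_l.
  assert (Heta2 : eta <= e / (3 * INR (S d))) by apply Rmin_r.
  destruct (contAt_finite d q0 s0 (fun i q s => hc (pf q) (lam q s) s i) d
     (fun i _ => contAt_hcoef d q0 s0 pf i (fun j => contAt_pf d q0 s0 j HA) HL) eta Heta0) as [h1 [H1 K1]].
  destruct (contAt_finite d q0 s0 (fun i q s => hc (pg q) (lam q s) s i) d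
     (fun i _ => contAt_hcoef d q0 s0 pg i (fun j => contAt_pg d q0 s0 j HA) HL) eta Heta0) as [h2 [H2 K2]].
  destruct (contAt_finite d q0 s0 (fun i q s => hc (ph q) (lam q s) s i) d
     (fun i _ => contAt_hcoef d q0 s0 ph i (fun j => contAt_ph d q0 s0 j HA) HL) eta Heta0) as [h3 [H3 K3]].
  exists (Rmin h1 (Rmin h2 h3)); split; [repeat apply Rmin_glb_lt; auto|].
  intros q s Hq Hd Hs.
  pose proof (Rmin_l h1 (Rmin h2 h3)); pose proof (Rmin_r h1 (Rmin h2 h3));
  pose proof (Rmin_l h2 h3); pose proof (Rmin_r h2 h3).
  specialize (K1 q s Hq ltac:(lra) ltac:(lra)).
  specialize (K2 q s Hq ltac:(lra) ltac:(lra)).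
  specialize (K3 q s Hq ltac:(lra) ltac:(lra)).
  unfold distA2.
  apply Rlt_le_trans with (INR (S d) * (3 * eta)).
  - apply sum_lt_bound. intros i Hi.
    specialize (K1 i Hi); specialize (K2 i Hi); specialize (K3 i Hi). cbv beta in K1, K2, K3.
    rewrite pf_Hraw, pg_Hraw, ph_Hraw, pf_Hraw, pg_Hraw, ph_Hraw.
    apply sq_lt in K1; apply sq_lt in K2; apply sq_lt in K3.
    assert (eta * eta <= eta) by nra.
    rewrite (sq_sym (hc (pf q0) _ _ _)), (sq_sym (hc (pg q0) _ _ _)), (sq_sym (hc (ph q0) _ _ _)).
    lra.
  - apply (Rmult_le_compat_l (INR (S d) * 3)) in Heta2; [|lra].
    replace (INR (S d) * 3 * (e / (3 * INR (S d)))) with e in Heta2 by (field; lra). lra.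
Qed.
Lemma tube (X : Type) (A : X -> Prop) (D : X -> R) (P : X -> R -> Prop) (a b : R) :
  a <= b ->
  (forall s, a <= s <= b -> exists e, 0 < e /\ forall x s', A x -> D x < e ->
      Rabs (s' - s) < e -> a <= s' <= b -> P x s') ->
  exists e, 0 < e /\ forall x, A x -> D x < e -> forall s, a <= s <= b -> P x s.
Proof.
  intros Hab Hloc.
  set (S := fun t => a <= t <= b /\ exists e, 0 < e /\ forall x, A x -> D x < e ->
                        forall s, a <= s <= t -> P x s).
  assert (Sa : S a).
  { split; [lra|]. destruct (Hloc a ltac:(lra)) as [e [He H]]. exists e; split; auto.
    intros x Ax Dx s Hs. apply H; auto; [|lra]. replace (s - a) with 0 by lra. rewrite Rabs_R0; lra. }
  assert (Sb : bound S) by (exists b; intros t [Ht _]; lra).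
  destruct (completeness S Sb (ex_intro _ a Sa)) as [c [Hub Hlub]].
  assert (Hac : a <= c) by (apply Hub; auto).
  assert (Hcb : c <= b) by (apply Hlub; intros t [Ht _]; lra).
  destruct (Hloc c ltac:(lra)) as [ec [Hec Hc]].
  assert (Ht : exists t, S t /\ c - ec < t).
  { apply NNPP; intro Hn.
    assert (c <= c - ec); [|lra].
    apply Hlub. intros t St. apply Rnot_lt_le. intro Hlt. apply Hn. exists t; auto. }
  destruct Ht as [t [[Ht1 [et [Het Hst]]] Hct]].
  remember (Rmin b (c + ec / 2)) as t' eqn:Ht'.
  assert (St' : S t').
  { split. { split; [rewrite Ht'; apply Rmin_glb; lra|rewrite Ht'; apply Rmin_l]. }
    exists (Rmin et ec); split; [apply Rmin_glb_lt; auto|].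
    intros x Ax Dx s Hs. pose proof (Rmin_l et ec); pose proof (Rmin_r et ec).
    pose proof (Rmin_l b (c + ec / 2)); pose proof (Rmin_r b (c + ec / 2)).
    destruct (Rle_dec s t).
    - apply Hst; auto; lra.
    - apply Hc; auto.
      + lra.
      + apply Rabs_def1; lra.
      + split; lra. }
  assert (t' <= c) by (apply Hub; auto).
  assert (Hbc : b <= c).
  { rewrite Ht' in H. destruct (Rle_dec b (c + ec / 2)).
    - rewrite Rmin_left in H; lra.
    - rewrite Rmin_right in H; lra. }
  assert (t' = b) by (rewrite Ht'; apply Rmin_left; lra).
  destruct St' as [_ [e [He Hp]]]. exists e; split; auto.
  intros x Ax Dx s Hs. apply (Hp x Ax Dx). lra.
Qed.
Lemma contAt_invnrm d q0 s0 : in_A d q0 -> 0 < nrm q0 -> contAt d q0 s0 (fun q _ => / nrm q).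
Proof.
  intros HA Hn. unfold nrm.
  assert (HS : contAt d q0 s0 (fun q _ => pf q 1%nat * pf q 1%nat + pg q 1%nat * pg q 1%nat + ph q 1%nat * ph q 1%nat)).
  { repeat apply contAt_plus; apply contAt_mult; first [apply contAt_pf|apply contAt_pg|apply contAt_ph]; auto. }
  pose proof (contAt_comp _ _ _ _ (inv_fct sqrt) HS) as HC.
  apply HC. apply continuity_pt_inv.
  + apply continuity_pt_sqrt. nra.
  + unfold nrm in Hn. lra.
Qed.

Lemma knots_eq (a b : Knots) : proj1_sig a = proj1_sig b -> a = b.
Proof. destruct a, b; simpl; intro; subst; f_equal; apply proof_irrelevance. Qed.
Lemma S2_eq (a b : S2) : proj1_sig a = proj1_sig b -> a = b.
Proof. destruct a, b; simpl; intro; subst; f_equal; apply proof_irrelevance. Qed.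

Definition fvec (p : PolyMap) : R * R * R := (pf p 1%nat / nrm p, pg p 1%nat / nrm p, ph p 1%nat / nrm p).

Lemma fvec_S2 p : 0 < nrm p -> sq3 (fvec p) = 1.
Proof.
  intro Hn. unfold sq3, fvec.
  assert (E : nrm p * nrm p = pf p 1%nat * pf p 1%nat + pg p 1%nat * pg p 1%nat + ph p 1%nat * ph p 1%nat)
    by (unfold nrm; apply sqrt_sqrt; nra).
  replace (pf p 1%nat / nrm p * (pf p 1%nat / nrm p) + pg p 1%nat / nrm p * (pg p 1%nat / nrm p) +
    ph p 1%nat / nrm p * (ph p 1%nat / nrm p)) with
    ((pf p 1%nat * pf p 1%nat + pg p 1%nat * pg p 1%nat + ph p 1%nat * ph p 1%nat) / (nrm p * nrm p)) by (field; lra).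
  rewrite <- E. field. lra.
Qed.

Definition fK (x : Knots) : S2 :=
  exist _ (fvec (proj1_sig x)) (fvec_S2 _ (nrm_pos _ (knot_facts _ (proj2_sig x)))).

Definition e1 (a : R) (i : nat) : R := match i with 1%nat => a | _ => 0 end.
Definition gmap (v : R * R * R) : PolyMap := let '(x, y, z) := v in ((e1 x, e1 y), e1 z).

Lemma gmap_knot v : sq3 v = 1 -> is_poly_knot (gmap v).
Proof.
  destruct v as [[x y] z]. unfold sq3. intro Hv. exists 1%nat. split; [|split].
  - intros i Hi. destruct i as [|[|k]]; [lia|lia|]. simpl. auto.
  - intros t1 t2 E. unfold map_eval, peval, pf, pg, ph in E. simpl in E. injection E as E1 E2 E3.
    destruct (Req_dec t1 t2) as [|Hne]; auto. exfalso.
    assert (x = 0) by (apply (Rmult_eq_reg_l (t1 - t2)); [|lra]; nra).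
    assert (y = 0) by (apply (Rmult_eq_reg_l (t1 - t2)); [|lra]; nra).
    assert (z = 0) by (apply (Rmult_eq_reg_l (t1 - t2)); [|lra]; nra).
    subst; lra.
  - intros t E. unfold map_deriv, pderiv, pf, pg, ph in E. simpl in E. injection E as E1 E2 E3.
    assert (x = 0) by lra. assert (y = 0) by lra. assert (z = 0) by lra. subst; lra.
Qed.

Definition gS (v : S2) : Knots := exist _ (gmap (proj1_sig v)) (gmap_knot _ (proj2_sig v)).

Lemma gmap_inA v : in_A 3 (gmap v).
Proof. destruct v as [[x y] z]. intro i. destruct i as [|[|k]]; simpl; repeat split; intros; auto; lia. Qed.

Lemma distA2_gmap v w : distA2 3 (gmap v) (gmap w) = dist2_R3 w v.
Proof. destruct v as [[x y] z], w as [[x' y'] z']. unfold distA2, dist2_R3, pf, pg, ph. simpl. ring. Qed.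

Lemma deg_inA p N : deg_bound p N -> in_A (N + 2) p.
Proof. intros H i. repeat split; intro; apply H; lia. Qed.

Lemma sqrt_pos_sq e : 0 < e -> 0 < sqrt e /\ sqrt e * sqrt e = e.
Proof. intro; split; [apply sqrt_lt_R0; auto|apply sqrt_sqrt; lra]. Qed.

Lemma fK_cont : continuous K_top S2_top fK.
Proof.
  intros V HV d Hd p Hp Vp.
  destruct (HV _ Vp) as [eps [Heps Hball]].
  set (p0 := proj1_sig p).
  assert (Hn : 0 < nrm p0) by apply (nrm_pos _ (knot_facts _ (proj2_sig p))).
  pose proof (contAt_invnrm d p0 0 Hp Hn) as Hi.
  assert (C1 : contAt d p0 0 (fun q s => pf q 1%nat * / nrm q)) by (apply contAt_mult; [apply contAt_pf; auto|auto]).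
  assert (C2 : contAt d p0 0 (fun q s => pg q 1%nat * / nrm q)) by (apply contAt_mult; [apply contAt_pg; auto|auto]).
  assert (C3 : contAt d p0 0 (fun q s => ph q 1%nat * / nrm q)) by (apply contAt_mult; [apply contAt_ph; auto|auto]).
  destruct (C1 (eps/2) ltac:(lra)) as [h1 [H1 K1]].
  destruct (C2 (eps/2) ltac:(lra)) as [h2 [H2 K2]].
  destruct (C3 (eps/2) ltac:(lra)) as [h3 [H3 K3]].
  remember (Rmin h1 (Rmin h2 h3)) as h eqn:Eh.
  assert (Hh : 0 < h) by (rewrite Eh; repeat apply Rmin_glb_lt; auto).
  destruct (sqrt_pos_sq h Hh) as [Hs1 Hs2].
  exists (sqrt h); split; [lra|]. intros q Hq Hdq. rewrite Hs2 in Hdq.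
  pose proof (Rmin_l h1 (Rmin h2 h3)); pose proof (Rmin_r h1 (Rmin h2 h3));
  pose proof (Rmin_l h2 h3); pose proof (Rmin_r h2 h3).
  assert (Z : Rabs (0 - 0) = 0) by (unfold Rminus; rewrite Rplus_opp_r, Rabs_R0; auto).
  specialize (K1 (proj1_sig q) 0 Hq ltac:(lra) ltac:(rewrite Z; lra)).
  specialize (K2 (proj1_sig q) 0 Hq ltac:(lra) ltac:(rewrite Z; lra)).
  specialize (K3 (proj1_sig q) 0 Hq ltac:(lra) ltac:(rewrite Z; lra)).
  apply Hball. simpl. unfold fvec, dist2_R3, Rdiv. fold p0.
  apply sq_lt in K1; apply sq_lt in K2; apply sq_lt in K3. nra.
Qed.

Lemma gS_cont : continuous S2_top K_top gS.
Proof.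
  intros V HV v Vv.
  destruct (HV 3%nat ltac:(lia) (gS v) (gmap_inA _) Vv) as [eps [Heps Hb]].
  exists eps; split; auto. intros w Hw. apply Hb; [apply gmap_inA|]. simpl.
  rewrite distA2_gmap. auto.
Qed.

Definition Hk (z : Knots * I01) : Knots :=
  exist _ (Hraw (proj1_sig (fst z)) (proj1_sig (snd z)))
    (Hraw_knot _ _ (proj2_sig (fst z)) (proj2_sig (snd z))).

Lemma open_at (V : Knots -> Prop) (HV : K_top V) d (Hd : (2 <= d)%nat) (q : Knots) (s : I01) :
  in_A d (proj1_sig q) -> V (Hk (q, s)) ->
  exists e, 0 < e /\ forall q' : Knots, in_A d (proj1_sig q') ->
    distA2 d (proj1_sig q) (proj1_sig q') < e -> forall s' : I01,
    Rabs (proj1_sig s' - proj1_sig s) < e -> V (Hk (q', s')).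
Proof.
  intros HA HVq.
  destruct (HV d Hd (Hk (q, s)) (Hraw_inA _ _ _ HA) HVq) as [eps [Heps Hb]].
  destruct (Hraw_cont d (proj1_sig q) (proj1_sig s) HA (nrm_pos _ (knot_facts _ (proj2_sig q)))
     (eps * eps) ltac:(nra)) as [h [Hh Hc]].
  exists h; split; auto. intros q' Hq' Hdq s' Hs'.
  apply Hb; [apply Hraw_inA; auto|]. simpl. apply Hc; auto.
Qed.

Lemma Hk_cont : continuous (prod_top K_top I01_top) K_top Hk.
Proof.
  intros V HV x y Hxy.
  destruct (proj2_sig x) as [N [HN _]].
  pose proof (deg_inA _ _ HN) as Hx.
  destruct (open_at V HV (N + 2) ltac:(lia) x y Hx Hxy) as [e0 [He0 Ho]].
  set (dl := e0 / 2).
  assert (Hdl : 0 < dl) by (unfold dl; lra).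
  exists (fun q : Knots => forall s' : I01, Rabs (proj1_sig s' - proj1_sig y) <= dl -> V (Hk (q, s'))).
  exists (fun s' : I01 => Rabs (proj1_sig s' - proj1_sig y) < dl).
  split; [|split; [|split; [|split]]].
  - intros d Hd p Hp HUp.
    destruct (proj2_sig y) as [Hy0 Hy1].
    set (yv := proj1_sig y) in *.
    destruct (tube Knots (fun q => in_A d (proj1_sig q)) (fun q => distA2 d (proj1_sig p) (proj1_sig q))
      (fun q s => forall h : 0 <= s <= 1, V (Hk (q, exist _ s h)))
      (Rmax 0 (yv - dl)) (Rmin 1 (yv + dl))) as [eps [Heps Ht]].
    + apply Rmax_lub; apply Rmin_glb; lra.
    + intros s [Hs1 Hs2].
      pose proof (Rmax_l 0 (yv - dl)); pose proof (Rmax_r 0 (yv - dl));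
      pose proof (Rmin_l 1 (yv + dl)); pose proof (Rmin_r 1 (yv + dl)).
      assert (hs : 0 <= s <= 1) by lra.
      assert (Vs : V (Hk (p, exist _ s hs))).
      { apply HUp. simpl. fold yv. apply Rabs_le; lra. }
      destruct (open_at V HV d Hd p (exist _ s hs) Hp Vs) as [e [He Hoe]].
      exists e; split; [exact He|]. intros q s' Aq Dq Hs' Hab h.
      apply (Hoe q Aq Dq (exist _ s' h)). simpl. auto.
    + destruct (sqrt_pos_sq eps Heps) as [Hs1 Hs2].
      exists (sqrt eps); split; auto. intros q Hq Hdq. rewrite Hs2 in Hdq.
      intros [sv hv] Hsv. simpl in Hsv. fold yv in Hsv.
      pose proof (Rle_abs (sv - yv)) as Ra; pose proof (Rle_abs (- (sv - yv))) as Rb.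
      rewrite Rabs_Ropp in Rb.
      apply (Ht q Hq Hdq sv).
      split; [apply Rmax_lub|apply Rmin_glb]; lra.
  - intros p Wp. exists (dl - Rabs (proj1_sig p - proj1_sig y)). split; [lra|].
    intros q Hq. pose proof (Rabs_triang (proj1_sig q - proj1_sig p) (proj1_sig p - proj1_sig y)).
    replace (proj1_sig q - proj1_sig p + (proj1_sig p - proj1_sig y)) with (proj1_sig q - proj1_sig y) in H by ring.
    lra.
  - intros s' Hs'. apply Ho; auto.
    + rewrite distA2_refl; auto.
    + unfold dl in Hs'; lra.
  - unfold Rminus; rewrite Rplus_opp_r, Rabs_R0; auto.
  - intros x' y' Ux Wy. apply Ux. lra.
Qed.

Lemma Hraw_0 p : 0 < nrm p -> Hraw p 0 = gmap (fvec p).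
Proof.
  intro Hn. unfold Hraw, gmap, fvec. f_equal; [f_equal|];
  apply functional_extensionality; intros [|[|k]]; unfold hc, e1, lam; simpl; try ring; field; lra.
Qed.

Lemma Hraw_1 p : Hraw p 1 = p.
Proof.
  destruct p as [[f g] h]. unfold Hraw, pf, pg, ph; simpl. f_equal; [f_equal|];
  apply functional_extensionality; intros [|j]; unfold hc, lam; simpl; rewrite ?pow1; ring.
Qed.

Lemma const_cont {X : Type} (TX : topology X) :
  continuous (prod_top TX I01_top) TX (fun z : X * I01 => fst z).
Proof.
  intros V HV x y Hxy. exists V, (fun _ => True). repeat split; auto.
  intros p _. exists 1; split; [lra|auto].
Qed.

Theorem mainTheorem2 : homotopy_equivalent K_top S2_top.
Proof.
  exists fK, gS. split; [apply fK_cont|split; [apply gS_cont|split]].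
  - exists Hk. split; [apply Hk_cont|split].
    + intros x t Ht. apply knots_eq. simpl. rewrite Ht. apply Hraw_0.
      apply (nrm_pos _ (knot_facts _ (proj2_sig x))).
    + intros x t Ht. apply knots_eq. simpl. rewrite Ht. apply Hraw_1.
  - exists (fun z => fst z). split; [apply const_cont|split].
    + intros y t _. apply S2_eq. destruct y as [[[a b] c] Hy]. simpl.
      unfold fvec, nrm, pf, pg, ph; simpl. unfold sq3 in Hy.
      replace (a * a + b * b + c * c) with 1 by lra. rewrite sqrt_1.
      f_equal; [f_equal|]; field.
    + reflexivity.
Qed.
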